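(* Let $n\geq 2$ and let $R$ be the unital associative ring $\langle x,y \mid x^n=0,\ y^n=0,\ xy+y^{n-1}x^{n-1}=1\rangle$. Then $R$ is generated as an additive group by the elements $y^ix^j$ for $0\leq i,j<n$.
   Context: $R$ denotes the quotient of the free unital associative ring $\mathbb{Z}\langle x,y\rangle$ by the two-sided ideal generated by $x^n$, $y^n$ and $xy+y^{n-1}x^{n-1}-1$; $x^0=y^0=1$. *)

(* Defs.v *)
From HB Require Import structures.
From mathcomp Require Import all_boot all_order all_algebra.
Set Implicit Arguments. Unset Strict Implicit. Unset Printing Implicit Defensive.
Import GRing.Theory.
Local Open Scope ring_scope.

(* Elements of the free unital associative ring Z<x,y>: formal
   noncommutative polynomial expressions in two variables X, Y. *)
Inductive ncterm : Type :=
  | NCConst of int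
  | NCX
  | NCY
  | NCAdd of ncterm & ncterm
  | NCOpp of ncterm
  | NCMul of ncterm & ncterm.

Fixpoint nceval (A : pzRingType) (x y : A) (t : ncterm) : A :=
  match t with
  | NCConst c => c%:~R
  | NCX => x
  | NCY => y
  | NCAdd s u => nceval x y s + nceval x y u
  | NCOpp s => - nceval x y s
  | NCMul s u => nceval x y s * nceval x y u
  end.

Definition R_relations (n : nat) (A : pzRingType) (x y : A) : Prop :=
  [/\ x ^+ n = 0, y ^+ n = 0 & x * y + y ^+ n.-1 * x ^+ n.-1 = 1].

(* Main.v *)
Require Import Defs.
From mathcomp Require Import all_boot all_order all_algebra.
From mathcomp Require Import zify.
Import GRing.Theory.
Local Open Scope ring_scope.

Section S.
Variables (n : nat) (A : pzRingType) (x y : A).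
Hypothesis hn : (2 <= n)%N.
Hypothesis hx : x ^+ n = 0.
Hypothesis hy : y ^+ n = 0.
Hypothesis hxy : x * y + y ^+ n.-1 * x ^+ n.-1 = 1.

Definition P (a : A) := exists c : 'I_n -> 'I_n -> int,
    a = \sum_(i < n) \sum_(j < n) (y ^+ i * x ^+ j) *~ c i j.

Lemma P0 : P 0.
Proof. exists (fun _ _ => 0); rewrite big1 // => i _; rewrite big1 // => j _; by rewrite mulr0z. Qed.

Lemma PD a b : P a -> P b -> P (a + b).
Proof.
move=> [c ->] [d ->]; exists (fun i j => c i j + d i j).
rewrite -big_split /=; apply: eq_bigr => i _; rewrite -big_split /=.
by apply: eq_bigr => j _; rewrite mulrzDr_tmp.
Qed.

Lemma PN a : P a -> P (- a).
Proof.
move=> [c ->]; exists (fun i j => - c i j).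
rewrite -sumrN; apply: eq_bigr => i _; rewrite -sumrN.
by apply: eq_bigr => j _; rewrite mulrNz.
Qed.

Lemma PZ a z : P a -> P (a *~ z).
Proof.
move=> [c ->]; exists (fun i j => c i j * z).
rewrite mulrz_suml; apply: eq_bigr => i _; rewrite mulrz_suml.
by apply: eq_bigr => j _; rewrite mulrzA.
Qed.

Lemma Psum (I : Type) (r : seq I) (F : I -> A) :
  (forall i, P (F i)) -> P (\sum_(i <- r) F i).
Proof. move=> H; apply: (big_ind P P0 PD) => i _; exact: H. Qed.

Lemma Pmono (i j : nat) : P (y ^+ i * x ^+ j).
Proof.
case: (ltnP i n) => hi; last first.
  rewrite -(subnK hi) exprD hy mulr0 mul0r. idtac. apply: P0.
case: (ltnP j n) => hj; last first.
  rewrite -(subnK hj) exprD hx mulr0 mulr0. idtac. apply: P0.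
exists (fun a b => if (a == Ordinal hi) && (b == Ordinal hj) then 1 else 0).
rewrite (bigD1 (Ordinal hi)) //=.
rewrite (bigD1 (Ordinal hj)) //= !eqxx /= mulr1z.
rewrite big1 ?addr0; last by move=> b /negbTE ->; rewrite ?andbF mulr0z.
rewrite big1 ?addr0 //; move=> a /negbTE ->; rewrite big1 // => b _; by rewrite mulr0z.
Qed.

Lemma Pleft (z : A) (a : A) : (forall i j, P (z * (y ^+ i * x ^+ j))) -> P a -> P (z * a).
Proof.
move=> H [c ->]; rewrite mulr_sumr; apply: Psum => i; rewrite mulr_sumr; apply: Psum => j.
rewrite mulrzAr; apply: PZ; exact: H.
Qed.

Lemma PyL a : P a -> P (y * a).
Proof. apply: Pleft => i j; rewrite mulrA -exprS; exact: Pmono. Qed.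

Lemma keyA k : (k <= n.-1)%N -> y ^+ n.-1 * x ^+ k * y ^+ k = y ^+ n.-1.
Proof.
elim: k => [|k IH] hk; first by rewrite !expr0 !mulr1.
have Z : y ^+ n.-1 * x ^+ k * y ^+ n.-1 = 0.
  have E : y ^+ n.-1 = y ^+ k * y ^+ (n.-1 - k) by rewrite -exprD subnKC //; exact: ltnW.
  rewrite {2}E mulrA (IH (ltnW hk)) -exprD.
  have -> : (n.-1 + (n.-1 - k) = n + (n.-2 - k))%N by lia.
  by rewrite exprD hy mul0r.
rewrite exprSr exprS !mulrA -(mulrA _ x y).
have -> : x * y = 1 - y ^+ n.-1 * x ^+ n.-1 by rewrite -hxy addrK.
rewrite mulrBr mulr1 !mulrBl (IH (ltnW hk)) !mulrA Z !mul0r subr0 //.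
Qed.

Lemma keyZ k : (k < n.-1)%N -> y ^+ n.-1 * x ^+ k * y ^+ n.-1 = 0.
Proof.
move=> hk.
have E : y ^+ n.-1 = y ^+ k * y ^+ (n.-1 - k) by rewrite -exprD subnKC //; exact: ltnW.
rewrite {2}E mulrA (@keyA k (ltnW hk)) -exprD.
have -> : (n.-1 + (n.-1 - k) = n + (n.-2 - k))%N by lia.
by rewrite exprD hy mul0r.
Qed.

Lemma exy : x * y = 1 - y ^+ n.-1 * x ^+ n.-1.
Proof. by rewrite -hxy addrK. Qed.

Lemma keyB k : (k < n.-1)%N -> y ^+ n.-1 * x ^+ k.+1 * y = y ^+ n.-1 * x ^+ k.
Proof.
move=> hk; rewrite exprSr !mulrA -(mulrA _ x y) exy mulrBr mulr1 !mulrA keyZ //.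
by rewrite mul0r subr0.
Qed.

Lemma keyC i : (i < n)%N -> x * y ^+ i.+1 = y ^+ i - y ^+ n.-1 * x ^+ (n.-1 - i).
Proof.
elim: i => [|i IH] hi; first by rewrite expr1 expr0 exy subn0.
rewrite exprSr mulrA IH 1?ltnW // mulrBl -exprSr.
have -> : (n.-1 - i = (n.-1 - i.+1).+1)%N by lia.
rewrite keyB //; lia.
Qed.

Lemma PxL a : P a -> P (x * a).
Proof.
apply: Pleft => i j.
case: i => [|i]; first by rewrite expr0 mul1r -exprS; have := Pmono 0 j.+1; rewrite expr0 mul1r.
case: (ltnP i.+1 n) => hi; last first.
  rewrite -(subnK hi) exprD hy mulr0 mul0r mulr0. idtac. apply: P0.
rewrite mulrA keyC 1?ltnW // mulrBl -mulrA -exprD.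
apply: PD; first exact: Pmono.
apply: PN; exact: Pmono.
Qed.

Lemma PxnL j a : P a -> P (x ^+ j * a).
Proof. elim: j => [|j IH] Ha; first by rewrite expr0 mul1r. by rewrite exprS -mulrA; apply: PxL; apply: IH. Qed.

Lemma PynL j a : P a -> P (y ^+ j * a).
Proof. elim: j => [|j IH] Ha; first by rewrite expr0 mul1r. by rewrite exprS -mulrA; apply: PyL; apply: IH. Qed.

Lemma PM a b : P a -> P b -> P (a * b).
Proof.
move=> [c ->] Hb; rewrite mulr_suml; apply: Psum => i; rewrite mulr_suml; apply: Psum => j.
rewrite mulrzAl; apply: PZ; rewrite -mulrA; apply: PynL; exact: PxnL.
Qed.

Lemma Pall t : P (nceval x y t).
Proof.
elim: t => [c| | |s Hs u Hu|s Hs|s Hs u Hu] /=.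
- have := PZ _ c (Pmono 0 0); by rewrite !expr0 mulr1.
- have := Pmono 0 1; by rewrite expr0 mul1r expr1.
- have := Pmono 1 0; by rewrite expr0 mulr1 expr1.
- exact: PD.
- exact: PN.
- exact: PM.
Qed.

End S.

Theorem lemma2 (n : nat) (hn : (2 <= n)%N) (A : pzRingType) (x y : A)
  (hrel : R_relations n x y) (t : ncterm) :
  exists c : 'I_n -> 'I_n -> int,
    nceval x y t = \sum_(i < n) \sum_(j < n) (y ^+ i * x ^+ j) *~ c i j.
Proof.
case: hrel => hx hy hxy; apply: Pall; assumption.
Qed.
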